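(* There exists a countable metrizable precompact abelian topological group which is not $g$-reversible.
   Context: All topological groups are assumed Hausdorff. A topological group $G$ is called $g$-reversible if every continuous automorphism of $G$ (i.e. every continuous group isomorphism of $G$ onto itself) is an open map. A Hausdorff abelian group is precompact if it is a subgroup of a compact Hausdorff group, equivalently for each neighbourhood $U$ of $0$ there is a finite $F$ with $U+F=G$. *)

(* Defs.v *)
From HB Require Import structures.
From mathcomp Require Import all_boot all_order all_algebra.
From Stdlib Require Import Reals.

Set Implicit Arguments.
Unset Strict Implicit.
Unset Printing Implicit Defensive.

Import GRing.Theory.
Local Open Scope ring_scope.

Definition is_topology (T : Type) (op : (T -> Prop) -> Prop) : Prop :=
  op (fun _ => True) /\
  (forall U V, op U -> op V -> op (fun x => U x /\ V x)) /\
  (forall F : (T -> Prop) -> Prop, (forall U, F U -> op U) ->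
     op (fun x => exists U, F U /\ U x)).

Definition hausdorff (T : Type) (op : (T -> Prop) -> Prop) : Prop :=
  forall x y : T, x <> y -> exists U V, op U /\ op V /\ U x /\ V y /\
     (forall z, U z -> V z -> False).

Definition is_top_group (G : zmodType) (op : (G -> Prop) -> Prop) : Prop :=
  is_topology op /\ hausdorff op /\
  (* addition G x G -> G is continuous (product topology) *)
  (forall (x y : G) W, op W -> W (x + y) ->
     exists U V, op U /\ op V /\ U x /\ V y /\
       (forall a b, U a -> V b -> W (a + b))) /\
  (forall W, op W -> op (fun x : G => W (- x))).

Definition countable_type (T : Type) : Prop :=
  exists f : T -> nat, forall x y, f x = f y -> x = y.

Definition is_metric (T : Type) (d : T -> T -> R) : Prop :=
  (forall x y, Rle 0 (d x y)) /\
  (forall x y, d x y = 0%R <-> x = y) /\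
  (forall x y, d x y = d y x) /\
  (forall x y z, Rle (d x z) (Rplus (d x y) (d y z))).

Definition metrizable (T : Type) (op : (T -> Prop) -> Prop) : Prop :=
  exists d : T -> T -> R, is_metric d /\
    forall U, op U <-> (forall x, U x -> exists eps, Rlt 0 eps /\
                          forall y, Rlt (d x y) eps -> U y).

Definition nbhd0 (G : zmodType) (op : (G -> Prop) -> Prop) (U : G -> Prop) :=
  exists V, op V /\ V 0 /\ (forall x, V x -> U x).

Definition precompact (G : zmodType) (op : (G -> Prop) -> Prop) : Prop :=
  forall U, nbhd0 op U ->
    exists F : seq G, forall g : G, exists u f, U u /\ List.In f F /\ g = u + f.

Definition continuous_map (T S : Type) (opT : (T -> Prop) -> Prop)
  (opS : (S -> Prop) -> Prop) (f : T -> S) : Prop :=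
  forall W, opS W -> opT (fun x => W (f x)).

Definition open_map (T S : Type) (opT : (T -> Prop) -> Prop)
  (opS : (S -> Prop) -> Prop) (f : T -> S) : Prop :=
  forall U, opT U -> opS (fun y => exists x, U x /\ f x = y).

Definition cont_automorphism (G : zmodType) (op : (G -> Prop) -> Prop)
  (f : G -> G) : Prop :=
  (forall x y, f (x + y) = f x + f y) /\
  (forall x y, f x = f y -> x = y) /\
  (forall y, exists x, f x = y) /\
  continuous_map op op f.

Definition g_reversible (G : zmodType) (op : (G -> Prop) -> Prop) : Prop :=
  forall f : G -> G, cont_automorphism op f -> open_map op op f.

(* Main.v *)
Require Import Defs.
From HB Require Import structures.
From mathcomp Require Import all_boot all_order all_algebra.
From Stdlib Require Import Reals.
From Stdlib Require Import Lia Lra Arith FunctionalExtensionality PropExtensionality.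
From mathcomp Require Import zify.

Local Open Scope coq_nat_scope.

Definition Dk (k u : nat) : Prop := forall i, i < k -> Nat.testbit u i = false.

Lemma tb_div2 a n : Nat.testbit (Nat.div2 a) n = Nat.testbit a (S n).
Proof. rewrite Nat.div2_div; apply Nat.div2_bits. Qed.

Lemma Dk_xor k u v : Dk k u -> Dk k v -> Dk k (Nat.lxor u v).
Proof. intros Hu Hv i Hi. rewrite Nat.lxor_spec (Hu i Hi) (Hv i Hi); auto. Qed.

Lemma Dk_mono k j u : Dk k u -> j <= k -> Dk j u.
Proof. intros H Hj i Hi. apply H. lia. Qed.

Lemma Dk_0 k : Dk k 0.
Proof. intros i _. apply Nat.bits_0. Qed.

Fixpoint lsbf (fuel u : nat) : nat :=
  match fuel with
  | 0 => 0
  | S f => if Nat.odd u then 0 else S (lsbf f (Nat.div2 u))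
  end.

Lemma lsbf_spec fuel : forall u, u <> 0 -> u <= fuel ->
  Nat.testbit u (lsbf fuel u) = true /\
  forall i, i < lsbf fuel u -> Nat.testbit u i = false.
Proof.
  induction fuel as [|f IH]; intros u Hu Hle.
  - lia.
  - simpl. destruct (Nat.odd u) eqn:Ho.
    + split. rewrite Nat.bit0_odd; exact Ho. intros; lia.
    + assert (Hd := Nat.div2_odd u). rewrite Ho in Hd. simpl in Hd.
      assert (Hd0 : Nat.div2 u <> 0) by lia.
      assert (Hdl : Nat.div2 u <= f) by lia.
      destruct (IH _ Hd0 Hdl) as [H1 H2].
      split.
      * rewrite -tb_div2. exact H1.
      * intros [|j] Hj.
        -- rewrite Nat.bit0_odd; exact Ho.
        -- rewrite -tb_div2. apply H2. lia.
Qed.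

Definition lsb u := lsbf u u.

Lemma Dk_lsb k u : u <> 0 -> (Dk k u <-> k <= lsb u).
Proof.
  intros Hu. destruct (lsbf_spec u u Hu (le_n _)) as [H1 H2].
  unfold lsb. split.
  - intros H. destruct (Nat.le_gt_cases k (lsbf u u)) as [Hk|Hk]; auto.
    rewrite H in H1; [discriminate|exact Hk].
  - intros Hk i Hi. apply H2. lia.
Qed.

Definition hp (n : nat) : R := pow (Rinv 2) n.

Lemma hp_pos n : Rlt 0 (hp n).
Proof. unfold hp. apply pow_lt. lra. Qed.

Lemma hp_lt_aux a m : Rlt (hp (S m + a)) (hp a).
Proof.
  induction m as [|m IH].
  - unfold hp. simpl. assert (Hp := hp_pos a). unfold hp in Hp.
    set X := pow (Rinv 2) a in Hp |- *. assert (Hh : Rmult (Rinv 2) X = Rdiv X 2) by (unfold Rdiv; ring). lra.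
  - unfold hp in *. simpl in *.
    assert (Hp := hp_pos (S m + a)). unfold hp in Hp. simpl in Hp.
    set X := Rmult (Rinv 2) (pow (Rinv 2) (m + a)) in Hp, IH |- *. assert (Hh : Rmult (Rinv 2) X = Rdiv X 2) by (unfold Rdiv; ring). lra.
Qed.

Lemma hp_lt a b : a < b -> Rlt (hp b) (hp a).
Proof.
  intros H. assert (E : b = S (b - a - 1) + a) by lia. rewrite E. apply hp_lt_aux.
Qed.

Lemma hp_le a b : a <= b -> Rle (hp b) (hp a).
Proof.
  intros H. destruct (Nat.eq_dec a b) as [->|Hn]. apply Rle_refl.
  left. apply hp_lt. lia.
Qed.

Lemma hp_small eps : Rlt 0 eps -> exists k, Rlt (hp k) eps.
Proof.
  intros He. destruct (pow_lt_1_zero (Rinv 2)) with (y := eps) as [N HN].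
  rewrite Rabs_pos_eq; lra. exact He.
  exists N. specialize (HN N (le_n _)). rewrite Rabs_pos_eq in HN. exact HN.
  left. apply hp_pos.
Qed.

Definition dn (x y : nat) : R :=
  if Nat.eq_dec x y then 0%R else hp (lsb (Nat.lxor x y)).

Lemma xor_neq0 x y : x <> y -> Nat.lxor x y <> 0.
Proof. intros H H'. apply H. apply Nat.lxor_eq_0_iff; exact H'. Qed.

Lemma dn_le k x y : Dk k (Nat.lxor x y) -> Rle (dn x y) (hp k).
Proof.
  unfold dn. destruct (Nat.eq_dec x y) as [e|n]; intros H; simpl in *.
  - left; apply hp_pos.
  - apply hp_le. apply Dk_lsb; auto. apply xor_neq0; auto.
Qed.

Lemma dn_lt k x y : Rlt (dn x y) (hp k) -> Dk k (Nat.lxor x y).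
Proof.
  unfold dn. destruct (Nat.eq_dec x y) as [e|n]; intros H; simpl in *.
  - subst. rewrite Nat.lxor_nilpotent. apply Dk_0.
  - apply Dk_lsb. apply xor_neq0; auto.
    destruct (Nat.le_gt_cases k (lsb (Nat.lxor x y))) as [Hk|Hk]; auto.
    exfalso. assert (Hk' := hp_lt _ _ Hk). simpl in H. lra.
Qed.

Lemma lxor_tri x y z : Nat.lxor x z = Nat.lxor (Nat.lxor x y) (Nat.lxor y z).
Proof.
  rewrite Nat.lxor_assoc -(Nat.lxor_assoc y y z) Nat.lxor_nilpotent Nat.lxor_0_l. auto.
Qed.

Lemma dn_metric : is_metric dn.
Proof.
  split; [|split; [|split]].
  - intros x y. unfold dn. destruct (Nat.eq_dec x y); simpl in *. lra. left; apply hp_pos.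
  - intros x y. unfold dn. destruct (Nat.eq_dec x y); simpl in *. tauto.
    split; [|tauto]. intros H. exfalso. assert (Hp := hp_pos (lsb (Nat.lxor x y))). lra.
  - intros x y. unfold dn. destruct (Nat.eq_dec x y), (Nat.eq_dec y x); simpl in *; try (subst; tauto).
    rewrite Nat.lxor_comm. reflexivity.
  - intros x y z.
    assert (Hxy : Rle 0 (dn x y)). { unfold dn. destruct (Nat.eq_dec x y); simpl in *. lra. left; apply hp_pos. }
    assert (Hyz : Rle 0 (dn y z)). { unfold dn. destruct (Nat.eq_dec y z); simpl in *. lra. left; apply hp_pos. }
    destruct (Nat.eq_dec x y) as [<-|nxy].
    { unfold dn at 2. destruct (Nat.eq_dec x x); simpl in *; [|tauto]. lra. }
    destruct (Nat.eq_dec y z) as [<-|nyz].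
    { unfold dn at 3. destruct (Nat.eq_dec y y); simpl in *; [|tauto]. lra. }
    assert (Exy := xor_neq0 _ _ nxy). assert (Eyz := xor_neq0 _ _ nyz).
    destruct (Nat.le_ge_cases (lsb (Nat.lxor x y)) (lsb (Nat.lxor y z))) as [Hm|Hm].
    + assert (H : Rle (dn x z) (hp (lsb (Nat.lxor x y)))).
      { apply dn_le. rewrite (lxor_tri x y z). apply Dk_xor.
        apply Dk_lsb; auto. apply Dk_lsb; auto. }
      unfold dn at 2. destruct (Nat.eq_dec x y); simpl in *; [tauto|]. lra.
    + assert (H : Rle (dn x z) (hp (lsb (Nat.lxor y z)))).
      { apply dn_le. rewrite (lxor_tri x y z). apply Dk_xor.
        apply Dk_lsb; auto. apply Dk_lsb; auto. }
      unfold dn at 3. destruct (Nat.eq_dec y z); simpl in *; [tauto|]. lra.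
Qed.

Lemma xor4 a b c d : Nat.lxor (Nat.lxor a b) (Nat.lxor c d) = Nat.lxor (Nat.lxor a c) (Nat.lxor b d).
Proof.
  apply Nat.bits_inj; intro n. rewrite !Nat.lxor_spec.
  destruct (Nat.testbit a n), (Nat.testbit b n), (Nat.testbit c n), (Nat.testbit d n); reflexivity.
Qed.

Lemma div2_lxor a b : Nat.div2 (Nat.lxor a b) = Nat.lxor (Nat.div2 a) (Nat.div2 b).
Proof.
  apply Nat.bits_inj; intro n. rewrite tb_div2 !Nat.lxor_spec !tb_div2. reflexivity.
Qed.

Record xnat := XN { xv : nat }.
HB.instance Definition _ := [isNew for xv].
HB.instance Definition _ := [Choice of xnat by <:].

Definition xadd (a b : xnat) := XN (Nat.lxor (xv a) (xv b)).
Definition xzero := XN 0.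
Definition xopp (a : xnat) := a.

Lemma xnat_ext (a b : xnat) : xv a = xv b -> a = b.
Proof. destruct a, b; simpl; intros ->; reflexivity. Qed.

Lemma xaddA : associative xadd.
Proof. intros a b c. apply xnat_ext; simpl. rewrite Nat.lxor_assoc. reflexivity. Qed.
Lemma xaddC : commutative xadd.
Proof. intros a b. apply xnat_ext; simpl. apply Nat.lxor_comm. Qed.
Lemma xadd0 : left_id xzero xadd.
Proof. intros a. apply xnat_ext; simpl. apply Nat.lxor_0_l. Qed.
Lemma xaddN : left_inverse xzero xopp xadd.
Proof. intros a. apply xnat_ext; simpl. apply Nat.lxor_nilpotent. Qed.

HB.instance Definition _ := GRing.isZmodule.Build xnat xaddA xaddC xadd0 xaddN.

Local Open Scope ring_scope.
Lemma addE (x y : xnat) : (x + y) = xadd x y. Proof. reflexivity. Qed.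
Lemma oppE (x : xnat) : (- x) = x. Proof. reflexivity. Qed.
Lemma zeroE : (0 : xnat) = XN 0. Proof. reflexivity. Qed.

Definition dG (x y : xnat) : R := dn (xv x) (xv y).
Definition opG (U : xnat -> Prop) : Prop := forall x, U x -> exists eps, Rlt 0 eps /\
   forall y, Rlt (dG x y) eps -> U y.
Definition opD (U : xnat -> Prop) : Prop := forall x, U x -> exists k,
   forall y, Dk k (Nat.lxor (xv x) (xv y)) -> U y.

Lemma op_iff U : opG U <-> opD U.
Proof.
  split.
  - intros H x Hx. destruct (H x Hx) as [eps [He Hy]].
    destruct (hp_small eps He) as [k Hk]. exists k. intros y Hd.
    apply Hy. unfold dG. assert (H1 := dn_le _ _ _ Hd). lra.
  - intros H x Hx. destruct (H x Hx) as [k Hk]. exists (hp k). split. apply hp_pos.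
    intros y Hd. apply Hk. apply dn_lt. exact Hd.
Qed.

Lemma opG_opD : opG = opD.
Proof.
  apply functional_extensionality; intro U. apply propositional_extensionality. apply op_iff.
Qed.

Definition ball (x : xnat) k (y : xnat) : Prop := Dk k (Nat.lxor (xv x) (xv y)).

Lemma ball_open x k : opD (ball x k).
Proof.
  intros y Hy. exists k. intros w Hw. unfold ball in *.
  rewrite (lxor_tri _ (xv y)). apply Dk_xor; auto.
Qed.

Lemma topD : is_top_group (opD : (xnat -> Prop) -> Prop).
Proof.
  split; [|split; [|split]].
  - split; [|split].
    + intros x _. exists 0. intros; exact I.
    + intros U V HU HV x [Ux Vx]. destruct (HU x Ux) as [k1 H1]. destruct (HV x Vx) as [k2 H2].
      exists (Nat.max k1 k2). intros y Hy. split.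
      apply H1. eapply Dk_mono. exact Hy. lia.
      apply H2. eapply Dk_mono. exact Hy. lia.
    + intros F HF x [U [FU Ux]]. destruct (HF U FU x Ux) as [k Hk].
      exists k. intros y Hy. exists U. split; auto.
  - intros x y Hxy.
    assert (Hn : Nat.lxor (xv x) (xv y) <> 0).
    { apply xor_neq0. intro E. apply Hxy. apply xnat_ext. exact E. }
    set k := S (lsb (Nat.lxor (xv x) (xv y))).
    exists (ball x k), (ball y k). split; [apply ball_open|]. split; [apply ball_open|].
    split. unfold ball. rewrite Nat.lxor_nilpotent. apply Dk_0.
    split. unfold ball. rewrite Nat.lxor_nilpotent. apply Dk_0.
    intros z Hx Hy. unfold ball in *.
    assert (H : Dk k (Nat.lxor (xv x) (xv y))).
    { rewrite (lxor_tri _ (xv z)). apply Dk_xor; auto. rewrite Nat.lxor_comm; auto. }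
    apply (Dk_lsb k _ Hn) in H. unfold k in H. lia.
  - intros x y W HW Wxy. destruct (HW _ Wxy) as [k Hk].
    exists (ball x k), (ball y k). split; [apply ball_open|]. split; [apply ball_open|].
    split. unfold ball. rewrite Nat.lxor_nilpotent. apply Dk_0.
    split. unfold ball. rewrite Nat.lxor_nilpotent. apply Dk_0.
    intros a b Ha Hb. apply Hk. rewrite !addE. simpl. rewrite xor4. apply Dk_xor; auto.
  - intros W HW x Hx. exact (HW x Hx).
Qed.

Local Open Scope coq_nat_scope.

Definition fm (x : xnat) : xnat := XN (Nat.lxor (xv x) (Nat.div2 (xv x))).

Fixpoint gf (fuel y : nat) : nat :=
  match fuel with 0 => 0 | S f => Nat.lxor y (gf f (Nat.div2 y)) end.

Lemma gf0 fuel : gf fuel 0 = 0.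
Proof. induction fuel as [|f IH]; simpl; auto. rewrite IH. reflexivity. Qed.

Lemma gf_spec fuel : forall y, (y <= fuel)%coq_nat ->
  Nat.lxor (gf fuel y) (Nat.div2 (gf fuel y)) = y.
Proof.
  induction fuel as [|f IH]; intros y Hy.
  - assert (y = 0) by lia. subst. reflexivity.
  - destruct (Nat.eq_dec y 0) as [->|Hn].
    + rewrite gf0. reflexivity.
    + assert (Hd : (Nat.div2 y <= f)%coq_nat).
      { assert (H := Nat.lt_div2 y). lia. }
      simpl. rewrite div2_lxor xor4 (IH _ Hd) Nat.lxor_assoc Nat.lxor_nilpotent Nat.lxor_0_r.
      reflexivity.
Qed.

Lemma gray_pow2 x k : Nat.lxor x (Nat.div2 x) = Nat.pow 2 k -> Nat.testbit x 0 = true.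
Proof.
  intros E.
  assert (Hrel : forall i, xorb (Nat.testbit x i) (Nat.testbit x (S i)) = (k =? i)).
  { intro i. rewrite -tb_div2 -Nat.lxor_spec E Nat.pow2_bits_eqb. reflexivity. }
  assert (Hhi : forall i, (k < i)%coq_nat -> Nat.testbit x i = false).
  { intros i Hi.
    assert (Hm : forall m, Nat.testbit x i = Nat.testbit x (Nat.add m i)).
    { induction m as [|m IHm]. reflexivity.
      rewrite IHm. specialize (Hrel (Nat.add m i)).
      replace (k =? Nat.add m i) with false in Hrel by (symmetry; apply Nat.eqb_neq; lia).
      change (Nat.add (S m) i) with (S (Nat.add m i)).
      destruct (Nat.testbit x (Nat.add m i)), (Nat.testbit x (S (Nat.add m i))); simpl in Hrel; congruence. }
    rewrite (Hm (S x)). apply Nat.bits_above_log2.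
    assert (H := Nat.log2_le_lin x (Nat.le_0_l x)). lia. }
  assert (Hk : Nat.testbit x k = true).
  { specialize (Hrel k). rewrite Nat.eqb_refl (Hhi (S k)) in Hrel; [|lia].
    destruct (Nat.testbit x k); simpl in Hrel; congruence. }
  assert (Hlo : forall j, (j <= k)%coq_nat -> Nat.testbit x (Nat.sub k j) = true).
  { induction j as [|j IHj]; intros Hj.
    - rewrite Nat.sub_0_r. exact Hk.
    - specialize (Hrel (Nat.sub k (S j))).
      replace (k =? Nat.sub k (S j)) with false in Hrel by (symmetry; apply Nat.eqb_neq; lia).
      replace (S (Nat.sub k (S j))) with (Nat.sub k j) in Hrel by lia.
      rewrite IHj in Hrel; [|lia].
      destruct (Nat.testbit x (Nat.sub k (S j))); simpl in Hrel; congruence. }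
  specialize (Hlo k (le_n _)). rewrite Nat.sub_diag in Hlo. exact Hlo.
Qed.

Lemma fm_add (x y : xnat) : fm (GRing.add x y) = GRing.add (fm x) (fm y).
Proof.
  apply xnat_ext. rewrite !addE. simpl. rewrite div2_lxor xor4. reflexivity.
Qed.

Lemma fm_xor a b : Nat.lxor (xv (fm a)) (xv (fm b)) =
  Nat.lxor (Nat.lxor (xv a) (xv b)) (Nat.div2 (Nat.lxor (xv a) (xv b))).
Proof. simpl. rewrite div2_lxor xor4. reflexivity. Qed.

Lemma fm_aut : cont_automorphism (opD : (xnat -> Prop) -> Prop) fm.
Proof.
  split; [|split; [|split]].
  - exact fm_add.
  - intros x y E. apply xnat_ext.
    set z := Nat.lxor (xv x) (xv y).
    assert (Hz : Nat.lxor z (Nat.div2 z) = 0).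
    { unfold z. rewrite -fm_xor E. apply Nat.lxor_nilpotent. }
    assert (Hz' := proj1 (Nat.lxor_eq_0_iff _ _) Hz).
    destruct (Nat.eq_dec z 0) as [H0|Hn].
    + apply Nat.lxor_eq_0_iff. exact H0.
    + exfalso. assert (H := Nat.lt_div2 z). lia.
  - intros y. exists (XN (gf (xv y) (xv y))). apply xnat_ext. simpl.
    apply gf_spec. lia.
  - intros W HW x Hx. destruct (HW _ Hx) as [k Hk]. exists (S k).
    intros y Hy. apply Hk. rewrite fm_xor. intros i Hi.
    have h1 := Hy i ltac:(lia). have h2 := Hy (S i) ltac:(lia).
    rewrite Nat.lxor_spec tb_div2 h1 h2. reflexivity.
Qed.

Lemma not_grev : ~ g_reversible (opD : (xnat -> Prop) -> Prop).
Proof.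
  intros H. assert (Ho := H fm fm_aut (ball (XN 0) 1) (ball_open _ _)).
  destruct (Ho (XN 0)) as [k Hk].
  - exists (XN 0). split. unfold ball. simpl. apply Dk_0. apply xnat_ext. reflexivity.
  - destruct (Hk (XN (Nat.pow 2 k))) as [x [Hx Ex]].
    + simpl. rewrite Nat.lxor_0_l. intros i Hi. rewrite Nat.pow2_bits_eqb.
      apply Nat.eqb_neq. lia.
    + unfold ball in Hx. simpl in Hx. rewrite Nat.lxor_0_l in Hx.
      assert (E : Nat.lxor (xv x) (Nat.div2 (xv x)) = Nat.pow 2 k).
      { change (xv (fm x) = xv (XN (Nat.pow 2 k))). rewrite Ex. reflexivity. }
      apply gray_pow2 in E. rewrite (Hx 0) in E; [discriminate|lia].
Qed.

Theorem theorem6p5 :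
  exists (G : zmodType) (op : (G -> Prop) -> Prop),
    is_top_group op /\ countable_type G /\ metrizable op /\
    precompact op /\ ~ g_reversible op.
Proof.
  exists xnat, opG. rewrite opG_opD. split; [exact topD|]. split; [|split; [|split]].
  - exists xv. intros x y E. apply xnat_ext. exact E.
  - exists dG. split.
    + split; [|split; [|split]].
      * intros x y. apply (proj1 dn_metric).
      * intros x y. split. intros E. apply xnat_ext. apply (proj1 (proj2 dn_metric)). exact E.
        intros ->. apply (proj1 (proj2 dn_metric)). reflexivity.
      * intros x y. apply (proj1 (proj2 (proj2 dn_metric))).
      * intros x y z. apply (proj2 (proj2 (proj2 dn_metric))).
    + intros U. symmetry. apply op_iff.
  - intros U [V [HV [V0 VU]]]. destruct (HV _ V0) as [k Hk].
    exists (List.map XN (List.seq 0 (Nat.pow 2 k))). intros g.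
    set m := Nat.modulo (xv g) (Nat.pow 2 k).
    exists (XN (Nat.lxor (xv g) m)), (XN m). split; [|split].
    + apply VU. apply Hk. simpl. rewrite Nat.lxor_0_l. intros i Hi.
      rewrite Nat.lxor_spec /m Nat.mod_pow2_bits_low; [|exact Hi].
      destruct (Nat.testbit (xv g) i); reflexivity.
    + apply List.in_map. apply List.in_seq. split. lia.
      simpl. apply Nat.mod_upper_bound. apply Nat.pow_nonzero. lia.
    + apply xnat_ext. rewrite addE. simpl.
      rewrite Nat.lxor_assoc Nat.lxor_nilpotent Nat.lxor_0_r. reflexivity.
  - exact not_grev.
Qed.
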